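(* $$f(n,q) \geq q^{2^{n-1}(1+o(1))} \quad \text{as } q\to\infty,\ n\to\infty.$$ That is, there is a function $\epsilon(n,q)$ with $\epsilon(n,q)\to 0$ as $q\to\infty$ and $n\to\infty$ such that $f(n,q) \geq q^{2^{n-1}(1+\epsilon(n,q))}$ for all integers $q\ge 2$ and $n \ge 1$.
   Context: A $q$-ary word is a finite string of characters over an alphabet of $q$ letters; the empty word is $\varepsilon$. $V$ is a subword of $W$ if $W = UVU'$ for some (possibly empty) words $U,U'$. A word $W$ is an instance of a word $V = x_0x_1\cdots x_{m-1}$ (each $x_i$ a letter) if $W = A_0A_1\cdots A_{m-1}$ with each $A_i$ nonempty and $A_i = A_j$ whenever $x_i = x_j$. A word $U$ encounters $V$ if some subword of $U$ is an instance of $V$; otherwise $U$ avoids $V$. The Zimin words are defined by $Z_0 := \varepsilon$ and $Z_{n+1} := Z_n x_n Z_n$ for distinct letters $x_0,x_1,\dots$. For positive integers $n,q$, $f(n,q)$ denotes the smallest integer $M$ such that every $q$-ary word of length $M$ encounters $Z_n$. *)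

(* Defs.v *)
From mathcomp Require Import all_boot.
Set Implicit Arguments. Unset Strict Implicit. Unset Printing Implicit Defensive.

Fixpoint zimin (n : nat) : seq nat :=
  if n is n'.+1 then zimin n' ++ n' :: zimin n' else [::].

Definition instance_of (T S : eqType) (W : seq T) (V : seq S) : Prop :=
  exists As : seq (seq T),
    [/\ size As = size V,
        all (fun A => A != [::]) As,
        flatten As = W &
        forall i j, i < size V -> j < size V ->
          onth V i = onth V j -> nth [::] As i = nth [::] As j].

Definition encounters (T S : eqType) (U : seq T) (V : seq S) : Prop :=
  exists W : seq T, infix W U /\ instance_of W V.

Definition all_encounter (n q M : nat) : Prop :=
  forall w : seq 'I_q, size w = M -> encounters w (zimin n).

Definition is_f (n q M : nat) : Prop :=
  all_encounter n q M /\ forall M', all_encounter n q M' -> M <= M'.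

(* Main.v *)
Require Import Defs.
From mathcomp Require Import all_boot.
From Stdlib Require Import Reals.
From mathcomp Require Import all_boot zify.
Set Implicit Arguments. Unset Strict Implicit. Unset Printing Implicit Defensive.

Section Z.
Variable T : eqType.

Fixpoint zi (n : nat) (w : seq T) : bool :=
  if n is n'.+1 then
    has (fun a => (a.*2 < size w) && zi n' (take a w) && (drop (size w - a) w == take a w))
        (iota 0 (size w))
  else w == [::].

Lemma zi_size n w : zi n w -> 2 ^ n - 1 <= size w.
Proof.
elim: n w => [|n IH] w /=; first by [].
case/hasP=> a _ /andP[/andP[ha hz] _].
have := IH _ hz; rewrite size_take.
have -> : (a < size w) by move: ha; rewrite -addnn; lia.
rewrite expnS; move: ha; rewrite -addnn. have := expn_gt0 2 n. lia.
Qed.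

Lemma size_zimin n : size (zimin n) = 2 ^ n - 1.
Proof.
elim: n => //= n IH; rewrite size_cat /= IH expnS. have := expn_gt0 2 n. lia.
Qed.

Lemma instance_zi n (W : seq T) : instance_of W (zimin n) -> zi n W.
Proof.
elim: n W => [|n IH] W [As [hs hall hfl hon]] /=.
  by move: hs hfl; case: As hall hon => //= _ _ _ <-.
set k := size (zimin n).
have hsz : size As = k + k.+1 by rewrite hs size_cat.
set As1 := take k As.
have e2 : drop k.+1 As = As1.
  apply: (@eq_from_nth _ [::]); first by rewrite size_drop size_take hsz; case: ifP; lia.
  move=> i; rewrite size_drop hsz => hi.
  rewrite nth_drop nth_take; last by lia.
  symmetry; apply: hon; rewrite ?size_cat; try (rewrite /= -/k; lia).
  rewrite (onth_cat _ _ i) (onth_cat _ _ (k.+1 + i)) -/k.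
  rewrite ifT; last by lia. rewrite ifN; last by lia.
  by rewrite (_ : k.+1 + i - k = i.+1) //; lia.
have eAs : As = As1 ++ nth [::] As k :: As1.
  have hk : k < size As by rewrite hsz; lia.
  by rewrite -{2}e2 /As1 -(drop_nth [::] hk) cat_take_drop.
set A := flatten As1; set b := nth [::] As k.
have hb : b != [::].
  by move: hall => /allP; apply; apply: mem_nth; rewrite hsz; lia.
have hA : zi n A.
  apply: IH; exists As1; split => //.
  - by rewrite size_take hsz ifT //; lia.
  - by apply/allP => x hx; move/allP: hall; apply; apply: mem_take hx.
  - move=> i j hi hj he; rewrite !nth_take //; have := hon i j.
    rewrite [zimin n.+1]/= size_cat /= !onth_cat hi hj; apply => //; [exact: (leq_trans hi (leq_addr _ _)) | exact: (leq_trans hj (leq_addr _ _))].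
have eW : W = A ++ b ++ A by rewrite -hfl eAs flatten_cat /=.
have hbs : 0 < size b by rewrite lt0n size_eq0.
apply/hasP; exists (size A).
  rewrite mem_iota /= eW !size_cat; lia.
have e3 : take (size A) W = A by rewrite eW take_size_cat.
have e4 : drop (size W - size A) W = A.
  rewrite (_ : size W - size A = size (A ++ b)); last by rewrite eW !size_cat; lia.
  by rewrite eW catA drop_size_cat.
rewrite e3 e4 eqxx hA andbT /= eW !size_cat -addnn; lia.
Qed.
End Z.
Section W.
Variable q : nat.
Local Notation wd := (seq 'I_q).

Fixpoint words k : seq wd :=
  if k is k'.+1 then [seq x :: w | x <- enum 'I_q, w <- words k'] else [:: [::]].

Lemma size_words k : size (words k) = q ^ k.
Proof. by elim: k => //= k IH; rewrite size_allpairs size_enum_ord IH expnS. Qed.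

Lemma uniq_words k : uniq (words k).
Proof.
elim: k => //= k IH; apply: allpairs_uniq => //; first exact: enum_uniq.
by move=> [x w] [y v] _ _ /= [-> ->].
Qed.

Lemma mem_words k w : (w \in words k) = (size w == k).
Proof.
elim: k w => [|k IH] [|x w] //=.
- by apply/allpairsP; case=> [[y v]] /= [_ _]; discriminate.
apply/allpairsP/idP => [[[y v]] /= [_]|].
  by rewrite IH => /eqP <- [_ ->].
by move=> h; exists (x, w); rewrite /= IH mem_enum.
Qed.

Lemma count_sub (P : pred wd) s t : uniq s -> {in s, forall w, P w -> w \in t} ->
  count P s <= size t.
Proof.
move=> us h; rewrite -size_filter; apply: uniq_leq_size; first exact: filter_uniq.
by move=> w; rewrite mem_filter => /andP[pw sw]; apply: h.
Qed.

Definition cnt n l := count (@zi _ n) (words l).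

Lemma cnt_step n l a :
  count (fun w => (a.*2 < size w) && zi n (take a w) && (drop (size w - a) w == take a w)) (words l)
  <= (if a.*2 < l then cnt n a * q ^ (l - a.*2) else 0).
Proof.
case: ifP => hl.
  rewrite (_ : cnt n a * q ^ (l - a.*2) = size [seq A ++ B ++ A | A <- filter (@zi _ n) (words a), B <- words (l - a.*2)]); last by rewrite size_allpairs size_filter size_words.
  apply: count_sub; first exact: uniq_words.
  move=> w; rewrite mem_words => /eqP hw /andP[/andP[_ hz] /eqP hd].
  have -> : w = take a w ++ take (l - a.*2) (drop a w) ++ take a w.
    rewrite -{1}(cat_take_drop a w) -{1}(cat_take_drop (l - a.*2) (drop a w)) drop_drop.
    by rewrite -hd hw; congr (_ ++ _ ++ drop _ _); move: hl; rewrite -addnn; lia.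
  apply: (allpairs_f (fun A B => A ++ B ++ A)).
    rewrite mem_filter hz mem_words size_takel ?eqxx // hw; move: hl; rewrite -addnn; lia.
  rewrite mem_words size_takel ?eqxx // size_drop hw; move: hl; rewrite -addnn; lia.
rewrite (eq_in_count (a2 := pred0)) ?count_pred0 // => w.
by rewrite mem_words => /eqP ->; rewrite hl.
Qed.
Lemma count_has (I : Type) (s : seq I) (P : I -> pred wd) t :
  count (fun w => has (P^~ w) s) t <= \sum_(i <- s) count (P i) t.
Proof.
elim: t => [|w t IH] /=; first by rewrite big1.
rewrite (eq_bigr (fun i => P i w + count (P i) t)) //= big_split /=.
apply: leq_add => //; elim: s {IH} => [|i s IHs]; rewrite ?big_nil ?big_cons //=.
by case: (P i w) => //=; rewrite add0n.
Qed.

Lemma sum_le_const (I : Type) (s : seq I) (F : I -> nat) K :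
  (forall i, F i <= K) -> \sum_(i <- s) F i <= size s * K.
Proof.
move=> h; elim: s => [|i s IH]; rewrite ?big_nil ?big_cons //=.
by rewrite mulSn leq_add.
Qed.

Hypothesis q2 : 2 <= q.

Definition S m l := \sum_(0 <= a < l) (m <= a) * q ^ (l + m - a).

Lemma S_small m l : l <= m -> S m l = 0.
Proof.
move=> hl; rewrite /S big_nat big1 // => a /andP[_ ha].
by rewrite (_ : (m <= a) = false) //; apply/negbTE; rewrite -ltnNge; apply: leq_trans ha hl.
Qed.

Lemma S_succ m l : S m l.+1 = q * S m l + (m <= l) * q ^ m.+1.
Proof.
rewrite /S big_nat_recr //= big_distrr /=; congr (_ + _).
  apply: eq_big_nat => a /andP[_ ha].
  by rewrite mulnCA -expnS; congr (_ * q ^ _); lia.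
by congr (_ * q ^ _); lia.
Qed.

Lemma S_le m l : S m l <= 2 * q ^ l.
Proof.
case: (leqP l m) => hl; first by rewrite S_small.
suff h : forall d, S m (m + d) + 2 * q ^ m <= 2 * q ^ (m + d).
  have := h (l - m); rewrite subnKC; [lia | exact: ltnW].
elim=> [|d IH]; first by rewrite addn0 S_small.
rewrite addnS S_succ leq_addr mul1n !expnS.
move: IH; set X := S m (m + d); set Y := q ^ (m + d); set Z := q ^ m => IH.
nia.
Qed.

Lemma cnt_small n a : a < 2 ^ n - 1 -> cnt n a = 0.
Proof.
move=> ha; rewrite /cnt (eq_in_count (a2 := pred0)) ?count_pred0 // => w.
rewrite mem_words => /eqP hw /=; apply/negbTE/negP => /zi_size; lia.
Qed.

Lemma cnt_bound n l : cnt n.+1 l * q ^ (2 ^ n.+1 - n.+2) <= 2 ^ n * q ^ l.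
Proof.
elim: n l => [|n IH] l.
  by rewrite muln1 mul1n /cnt -(size_words l) count_size.
set m := 2 ^ n.+1 - 1.
have hE : 2 ^ n.+2 - n.+3 = (2 ^ n.+1 - n.+2) + m.
  rewrite /m; have := ltn_expl n.+1 (isT : 1 < 2); rewrite [2 ^ n.+2]expnS; lia.
rewrite hE.
have h1 : cnt n.+2 l <= \sum_(a <- iota 0 l) (if a.*2 < l then cnt n.+1 a * q ^ (l - a.*2) else 0).
  rewrite /cnt (eq_in_count (a2 := fun w => has (fun a => (a.*2 < size w) && zi n.+1 (take a w) && (drop (size w - a) w == take a w)) (iota 0 l))); last first.
    by move=> w; rewrite mem_words => /eqP <-.
  apply: leq_trans (count_has _ _ _) _.
  by apply: leq_sum => a _; apply: cnt_step.
apply: leq_trans (leq_mul h1 (leqnn _)) _.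
rewrite big_distrl /=.
apply: (@leq_trans (\sum_(a <- iota 0 l) 2 ^ n * ((m <= a) * q ^ (l + m - a)))).
  apply: leq_sum => a _.
  case: ifP => h; first last; first by rewrite mul0n.
  case: (leqP m a) => hm; last by rewrite cnt_small // mul0n.
  have := IH a; rewrite mul1n.
  rewrite (_ : l + m - a = (l - a.*2) + m + a); last by move: h; rewrite -addnn; lia.
  rewrite !expnD; set A := cnt _ _; set E := q ^ (2 ^ n.+1 - n.+2).
  set B := q ^ (l - a.*2); set C := q ^ m; set D := q ^ a; nia.
rewrite -big_distrr /=.
have := S_le m l; rewrite /S /index_iota subn0 expnS => hS.
apply: leq_trans (leq_mul (leqnn (2 ^ n)) hS) _; nia.
Qed.

Lemma win n i l M : count (fun w => (i + l <= M) && zi n (take l (drop i w))) (words M)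
  <= q ^ i * (cnt n l * q ^ (M - i - l)).
Proof.
case: (leqP (i + l) M) => h; last first.
  by rewrite (eq_in_count (a2 := pred0)) ?count_pred0 // => w _ /=; rewrite leqNgt h.
rewrite (_ : q ^ i * (cnt n l * q ^ (M - i - l)) = size [seq u ++ v | u <- words i, v <- [seq y ++ x | y <- filter (@zi _ n) (words l), x <- words (M - i - l)]]); last first.
  by rewrite !size_allpairs size_filter !size_words.
apply: count_sub; first exact: uniq_words.
move=> w; rewrite mem_words => /eqP hw /andP[_ hz].
rewrite -(cat_take_drop i w) -(cat_take_drop l (drop i w)).
apply: allpairs_f; first by rewrite mem_words size_takel ?eqxx // hw; lia.
apply: allpairs_f; first by rewrite mem_filter hz mem_words size_takel ?eqxx // size_drop hw; lia.
by rewrite mem_words !size_drop hw; apply/eqP; lia.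
Qed.

Lemma main_nat n M : all_encounter n.+1 q M -> q ^ (2 ^ n.+1 - n.+2) <= 2 ^ n * (M.+1 * M.+1).
Proof.
move=> hall.
set encM := fun w : wd => has (fun i => has (fun l => (i + l <= M) && zi n.+1 (take l (drop i w))) (iota 0 M.+1)) (iota 0 M.+1).
have h1 : q ^ M = count encM (words M).
  rewrite -(size_words M) -count_predT; apply: eq_in_count => w.
  rewrite mem_words => /eqP hw /=; symmetry.
  have [W [/infixP [s [s' ew]] hi]] := hall w hw.
  have hz := instance_zi hi.
  apply/hasP; exists (size s).
    by rewrite mem_iota /= -hw ew !size_cat add0n ltnS leq_addr.
  apply/hasP; exists (size W).
    by rewrite mem_iota /= -hw ew !size_cat add0n ltnS addnCA leq_addr.
  by rewrite ew drop_size_cat // take_size_cat // hz andbT -hw ew !size_cat addnA leq_addr.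
set E := q ^ (2 ^ n.+1 - n.+2).
have h2 : q ^ M * E <= M.+1 * M.+1 * (2 ^ n * q ^ M).
  rewrite {1}h1; apply: leq_trans (leq_mul (count_has _ _ _) (leqnn E)) _.
  rewrite big_distrl.
  apply: leq_trans (@sum_le_const _ (iota 0 M.+1) _ (M.+1 * (2 ^ n * q ^ M)) _) _; last by rewrite size_iota mulnA.
  move=> i; apply: leq_trans (leq_mul (count_has _ _ _) (leqnn E)) _.
  rewrite big_distrl.
  apply: leq_trans (@sum_le_const _ (iota 0 M.+1) _ (2 ^ n * q ^ M) _) _; last by rewrite size_iota.
  move=> l.
  case: (leqP (i + l) M) => h; last first.
    by rewrite (eq_in_count (a2 := pred0)) ?count_pred0 // => w _ /=; rewrite leqNgt h.
  have := win n.+1 i l M; rewrite h => hw.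
  apply: leq_trans (leq_mul hw (leqnn E)) _.
  have := cnt_bound n l; rewrite -/E => hb.
  rewrite (_ : q ^ M = q ^ i * q ^ (M - i - l) * q ^ l); last by rewrite -!expnD; congr (_ ^ _); lia.
  set A := q ^ i; set B := q ^ (M - i - l); set C := cnt _ _; set D := q ^ l; nia.
have hq : 0 < q ^ M by rewrite expn_gt0; lia.
rewrite (_ : M.+1 * M.+1 * (2 ^ n * q ^ M) = q ^ M * (2 ^ n * (M.+1 * M.+1))) in h2; last by lia.
by rewrite leq_pmul2l in h2.
Qed.
End W.

Lemma M_pos n q M : all_encounter n.+1 q M -> 0 < M.
Proof.
case: M => // hall; have [W [/infixP [s [s' ew]] hi]] := hall [::] erefl.
have := zi_size (instance_zi hi); have := ltn_expl n.+1 (isT : 1 < 2).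
have : size W = 0 by move: (f_equal size ew); rewrite !size_cat /=; lia.
lia.
Qed.

Lemma nat_bound n q M : 2 <= q -> all_encounter n.+1 q M ->
  q ^ (2 ^ n.+1 - n.+2) <= 2 ^ n.+2 * (M * M).
Proof.
move=> q2 hall; have h := main_nat q2 hall; have hM := M_pos hall.
apply: leq_trans h _; rewrite !expnS; nia.
Qed.

From Stdlib Require Import Reals Lra Lia.
Open Scope R_scope.

Lemma pow_expn m n : Nat.pow m n = expn m n.
Proof. elim: n => [|n IH]; first by []. by rewrite expnS -IH. Qed.

Lemma INR_muln m n : INR (muln m n) = INR m * INR n.
Proof. exact: mult_INR. Qed.

Lemma INR_expn m n : INR (expn m n) = INR m ^ n.
Proof. by rewrite -pow_expn pow_INR. Qed.

Definition eps (n q : nat) : R :=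
  - (INR (n + 1) + INR (n + 1) * ln 2 / ln (INR q)) / INR (2 ^ n)%nat.

Lemma sq_le_pow n : (4 <= n)%nat -> (n * n <= expn 2 n)%nat.
Proof.
move=> h; rewrite -(subnK h); elim: (n - 4)%nat => // k IH.
rewrite addSn expnS; nia.
Qed.

Lemma eps_small : forall e : R, 0 < e -> exists N : nat,
  forall n q : nat, (N <= n)%nat -> (N <= q)%nat -> Rabs (eps n q) < e.
Proof.
move=> e he; have [k hk] := INR_unbounded (4 / e).
exists (maxn 4 k) => n q hn hq.
have hn4 : (4 <= n)%nat by apply: leq_trans hn; rewrite leq_maxl.
have hnk : (k <= n)%nat by apply: leq_trans hn; rewrite leq_maxr.
have hq2 : (2 <= q)%nat by apply: leq_trans hq; apply: leq_trans (leq_maxl _ _).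
have l2p : 0 < ln 2 by have := ln_lt_2; move=> ?; lra.
have hq2r : 2 <= INR q by apply: (le_INR 2); apply/leP.
have hL : ln 2 <= ln (INR q).
  case: (Rle_lt_or_eq_dec _ _ hq2r) => h; last by rewrite -h; apply: Rle_refl.
  by apply: Rlt_le; apply: ln_increasing; lra.
set L := ln (INR q) in hL *; set l2 := ln 2 in l2p hL *.
have hP : 0 < INR (Nat.pow 2 n) by apply: lt_0_INR; rewrite pow_expn; apply/ltP; rewrite expn_gt0.
set P := INR (Nat.pow 2 n) in hP *.
set a := INR (n + 1).
have ha : 0 <= a by apply: pos_INR.
have hnat : (2 * (n + 1) * n <= 4 * expn 2 n)%nat by have := sq_le_pow hn4; nia.
have hnatR : 2 * a * INR n <= 4 * P.
  have := le_INR _ _ (elimT leP hnat); rewrite ?mulnE !mult_INR INR_expn -pow_INR -/P -/a.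
  rewrite (_ : INR 2 = 2); last by simpl; lra.
  by rewrite (_ : INR 4 = 4); last by simpl; lra.
set t := l2 / L.
have hL0 : 0 < L by lra.
have htL : t * L = l2 by rewrite /t; field; lra.
have ht0 : 0 <= t by nra.
have ht1 : t <= 1 by nra.
have he' : eps n q = - ((a + a * t) / P).
  by rewrite /eps /t -/L -/l2 -/P -/a; field; split; lra.
rewrite he' Rabs_Ropp Rabs_pos_eq; last first.
  by apply: Rmult_le_pos; [nra | apply: Rlt_le; apply: Rinv_0_lt_compat].
have hkn : INR k <= INR n by apply: le_INR; apply/leP.
have hn0 : 0 < INR n by apply: lt_0_INR; apply/ltP; lia.
have hek : 4 < e * INR k.
  have : 4 / e * e < INR k * e by apply: Rmult_lt_compat_r.
  by rewrite /Rdiv Rmult_assoc Rinv_l; lra.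
set u := (a + a * t) / P.
have hu : u * P = a + a * t by rewrite /u; field; lra.
have hat : a * t <= a by nra.
have hu1 : (u * INR n) * P <= 4 * P.
  rewrite Rmult_assoc (Rmult_comm (INR n)) -Rmult_assoc hu.
  apply: Rle_trans hnatR; apply: Rmult_le_compat_r; [lra | lra].
have hu2 : u * INR n <= 4 by apply: (Rmult_le_reg_r P).
have hekn : e * INR k <= e * INR n by apply: Rmult_le_compat_l; lra.
apply: (Rmult_lt_reg_r (INR n)) => //; lra.
Qed.

Lemma eps_bound (n q M : nat) : (2 <= q)%nat -> (1 <= n)%nat -> is_f n q M ->
       Rpower (INR q) (INR (2 ^ (n - 1))%nat * (1 + eps n q)) <= INR M.
Proof.
move=> hq hn [hall _]; case: n hn hall => // n _ hall.
have hnat := nat_bound hq hall.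
have hle : (n.+2 <= expn 2 n.+1)%nat by apply: ltn_expl.
have hq2r : 2 <= INR q by apply: (le_INR 2); apply/leP.
have hQ : 0 < INR q by lra.
have l2p : 0 < ln 2 by have := ln_lt_2; move=> ?; lra.
have hL : ln 2 <= ln (INR q).
  case: (Rle_lt_or_eq_dec _ _ hq2r) => h; last by rewrite -h; apply: Rle_refl.
  by apply: Rlt_le; apply: ln_increasing; lra.
have hb : INR q ^ (expn 2 n.+1 - n.+2) <= 2 ^ n.+2 * (INR M * INR M).
  have := le_INR _ _ (elimT leP hnat); rewrite (INR_muln (expn 2 n.+2)) (INR_muln M M) !INR_expn.
  have -> : INR 2 = 2 by simpl; lra.
  done.
have hER : INR (expn 2 n.+1 - n.+2) = 2 * 2 ^ n - INR n.+2.
  rewrite minus_INR; last by apply/leP.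
  rewrite INR_expn; have -> : INR 2 = 2 by simpl; lra.
  by rewrite [2 ^ n.+1]/=.
set E := (expn 2 n.+1 - n.+2)%nat in hb hER *.
have h2 : INR 2 = 2 by simpl; lra.
have hp : INR (2 ^ (n.+1 - 1)) = 2 ^ n by rewrite subn1 /= pow_INR h2.
have hp1 : INR (2 ^ n.+1) = 2 * 2 ^ n by rewrite pow_INR h2.
have ha : INR (n.+1 + 1) = INR n.+2 by f_equal; lia.
have hT : 0 < 2 ^ n by apply: pow_lt; lra.
set a := INR n.+2 in ha hER *.
set L := ln (INR q) in hL *; set l2 := ln 2 in l2p hL *.
have hL0 : 0 < L by lra.
set y := INR (2 ^ (n.+1 - 1)) * (1 + eps n.+1 q).
have hy : y * L + y * L = INR E * L - a * l2.
  rewrite /y hp /eps hp1 ha hER -/L -/l2; field; lra.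
rewrite /Rpower -/L.
set Y := exp (y * L).
have hY0 : 0 < Y by apply: exp_pos.
have e1 : exp (INR E * L) = INR q ^ E by rewrite -(Rpower_pow E (INR q) hQ).
have e2 : exp (a * l2) = 2 ^ n.+2 by rewrite -(Rpower_pow n.+2 2 Rlt_0_2).
have hY2 : Y * Y * 2 ^ n.+2 = INR q ^ E.
  rewrite /Y -exp_plus hy -e2 -exp_plus -e1; f_equal; ring.
have hM : 0 <= INR M by apply: pos_INR.
have hP2 : 0 < 2 ^ n.+2 by apply: pow_lt; lra.
have hYM : Y * Y <= INR M * INR M.
  apply: (Rmult_le_reg_r (2 ^ n.+2)) => //; lra.
nra.
Qed.

Open Scope R_scope.

Theorem mainTheorem2 :
  exists eps : nat -> nat -> R,
    (forall e : R, 0 < e -> exists N : nat,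
       forall n q : nat, (N <= n)%nat -> (N <= q)%nat -> Rabs (eps n q) < e) /\
    (forall n q M : nat, (2 <= q)%nat -> (1 <= n)%nat -> is_f n q M ->
       Rpower (INR q) (INR (2 ^ (n - 1))%nat * (1 + eps n q)) <= INR M).
Proof.
exists eps; split; [exact: eps_small | exact: eps_bound].
Qed.
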